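(* Let $G(x,y;\xi)$, $g(x,y)=\mathbb{E}_{\xi\sim\mathcal{P}}G(x,y;\xi)$ be such that there is $\bar l>0$ with, for every $\xi$ and all $x_1,x_2,y_1,y_2$, $\|\nabla_xG(x_1,y_1;\xi)-\nabla_xG(x_2,y_2;\xi)\|\leq\bar l[\|x_1-x_2\|+\|y_1-y_2\|]$ and $\|\nabla_yG(x_1,y_1;\xi)-\nabla_yG(x_2,y_2;\xi)\|\leq\bar l[\|x_1-x_2\|+\|y_1-y_2\|]$. Let $(x_t,y_t,m_t,n_t)$ be generated by the ZO-VRAGDA algorithm described in the context with step sizes $\alpha,\beta>0$. Then for every $t\geq0$, $$\begin{aligned}\mathbb{E}g(x_{t+1},y_{t+1})\geq{}&\mathbb{E}g(x_t,y_t)+\frac\beta2\mathbb{E}\|\nabla_yg(x_{t+1},y_t)\|^2-\frac\alpha2\mathbb{E}\|\nabla_xg(x_t,y_t)\|^2-\frac\beta2\mathbb{E}\|\nabla_yg(x_{t+1},y_t)-n_t\|^2\\&+\frac\alpha2\mathbb{E}\|\nabla_xg(x_t,y_t)-m_t\|^2+\frac\beta2(1-\bar l\beta)\mathbb{E}\|n_t\|^2-\frac\alpha2(1+\alpha\bar l)\mathbb{E}\|m_t\|^2.\end{aligned}$$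
   Context: Zeroth-order estimators: for a sample $\xi$ and a direction $u$ uniform on the unit sphere of $\mathbb{R}^{d_1}$, $\hat\nabla_xG(x,y;\xi)=\frac{G(x+\mu_1u,y;\xi)-G(x,y;\xi)}{\mu_1/d_1}u$; for $\zeta$ and $v$ uniform on the unit sphere of $\mathbb{R}^{d_2}$, $\hat\nabla_yG(x,y;\zeta)=\frac{G(x,y+\mu_2v;\zeta)-G(x,y;\zeta)}{\mu_2/d_2}v$; for a sample set $\mathcal{B}$ of size $r$ (each sample with its own independent direction) $\hat\nabla G(x,y;\mathcal{B})$ is the average of the single-sample estimators. ZO-VRAGDA with parameters $q,B,b\in\mathbb{N}$, $\alpha,\beta,\mu_1,\mu_2>0$, initial $(x_0,y_0)$: for $t=0,1,\dots$: if $t\bmod q=0$, draw $B$ fresh i.i.d. samples $\mathcal{B}_t$ from $\mathcal{P}$ and set $m_t=\hat\nabla_xG(x_t,y_t;\mathcal{B}_t)$; otherwise draw $b$ fresh samples $\mathcal{I}_t$ and set $m_t=\hat\nabla_xG(x_t,y_t;\mathcal{I}_t)-\hat\nabla_xG(x_{t-1},y_{t-1};\mathcal{I}_t)+m_{t-1}$ (same samples and directions in both terms). Set $x_{t+1}=x_t-\alpha m_t$. Then if $t\bmod q=0$, draw $B$ fresh samples $\bar{\mathcal{B}}_t$ and set $n_t=\hat\nabla_yG(x_{t+1},y_t;\bar{\mathcal{B}}_t)$; otherwise draw $b$ fresh samples $\bar{\mathcal{I}}_t$ and set $n_t=\hat\nabla_yG(x_{t+1},y_t;\bar{\mathcal{I}}_t)-\hat\nabla_yG(x_t,y_{t-1};\bar{\mathcal{I}}_t)+n_{t-1}$.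 Set $y_{t+1}=y_t+\beta n_t$. Expectations are over all randomness of the algorithm. *)

(* Defs.v *)
From HB Require Import structures.
From mathcomp Require Import all_boot all_order all_algebra.
From mathcomp Require Import all_classical all_reals all_analysis.
Set Implicit Arguments.
Unset Strict Implicit.
Unset Printing Implicit Defensive.
Import Order.TTheory GRing.Theory Num.Theory.
Import numFieldNormedType.Exports.
Local Open Scope classical_set_scope.
Local Open Scope ring_scope.

Section ZO.
Variable R : realType.

Definition dotv n (u v : 'rV[R]_n) : R := \sum_(i < n) u 0 i * v 0 i.
Definition enorm n (v : 'rV[R]_n) : R := Num.sqrt (\sum_(i < n) v 0 i ^+ 2).

Definition grad n (f : 'rV[R]_n -> R) (x : 'rV[R]_n) : 'rV[R]_n :=
  \row_(i < n) derive f x (delta_mx 0 i).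

Definition grad_x d1 d2 (f : 'rV[R]_d1 -> 'rV[R]_d2 -> R) x y :=
  grad (fun x' => f x' y) x.
Definition grad_y d1 d2 (f : 'rV[R]_d1 -> 'rV[R]_d2 -> R) x y :=
  grad (fun y' => f x y') y.

(* coordinates of a row vector as a tuple (tuples carry the product sigma-algebra) *)
Definition rv2t n (v : 'rV[R]_n) : n.-tuple R := [tuple v 0 i | i < n].

(* d-dimensional Lebesgue integral of a nonnegative function, as iterated
   one-dimensional Lebesgue integrals (Tonelli); coordinates are (nat -> R) *)
Fixpoint iter_leb (n : nat) (f : (nat -> R) -> \bar R) : \bar R :=
  if n is k.+1 then
    (\int[@lebesgue_measure R]_s
       iter_leb k (fun v => f (fun i => if i is j.+1 then v j else s)))%E
  else f (fun _ => 0).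

Definition vol n (C : set 'rV[R]_n) : \bar R :=
  iter_leb n (fun v => ((\1_C (\row_(i < n) v (nat_of_ord i)) : R))%:E).

Definition unit_ball n : set 'rV[R]_n := [set z | enorm z <= 1].
Definition unit_sphere n : set 'rV[R]_n := [set z | enorm z = 1].
Definition cone n (A : set 'rV[R]_n) : set 'rV[R]_n :=
  [set z | exists r a, 0 < r <= 1 /\ A a /\ z = r *: a].

Definition rv_measurable n (A : set 'rV[R]_n) : Prop :=
  measurable [set t : n.-tuple R | A (\row_(i < n) tnth t i)].

Section Prob.
Variables (dO : measure_display) (Omega : measurableType dO)
  (P : probability Omega R).

(* u is uniformly distributed on the unit sphere of R^n: its law is the
   normalized surface measure sigma(A) = vol(cone A) / vol(unit ball) *)
Definition unif_sphere n (u : Omega -> 'rV[R]_n) : Prop :=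
  measurable_fun setT (fun w => rv2t (u w)) /\
  forall A : set 'rV[R]_n, rv_measurable A -> A `<=` @unit_sphere n ->
    P (u @^-1` A) = (fine (vol (cone A)) / fine (vol (@unit_ball n)))%:E.

Definition has_law (dX : measure_display) (X : measurableType dX)
  (Q : probability X R) (xi : Omega -> X) : Prop :=
  measurable_fun setT xi /\
  forall A : set X, measurable A -> P (xi @^-1` A) = Q A.

Definition mutually_independent (K : eqType) (F : K -> set (set Omega)) : Prop :=
  forall (J : seq K) (E : K -> set Omega), uniq J ->
    (forall j, j \in J -> F j (E j)) ->
    P (\big[setI/setT]_(j <- J) E j) = (\prod_(j <- J) P (E j))%E.

Definition sigma_rv (dX : measure_display) (X : measurableType dX)
  (xi : Omega -> X) : set (set Omega) :=
  [set E | exists2 A, measurable A & E = xi @^-1` A].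
Definition sigma_rvec n (u : Omega -> 'rV[R]_n) : set (set Omega) :=
  sigma_rv (fun w => rv2t (u w)).

Definition expect (X : Omega -> R) : R := Rintegral P setT X.
Definition rv_integrable (X : Omega -> R) : Prop :=
  P.-integrable setT (fun w => (X w)%:E).
End Prob.

Section Algo.
Variables (dX : measure_display) (X : measurableType dX).
Variables (d1 d2 : nat) (G : 'rV[R]_d1 -> 'rV[R]_d2 -> X -> R).
Variables (q B b : nat) (alpha beta mu1 mu2 : R) (x0 : 'rV[R]_d1) (y0 : 'rV[R]_d2).

Definition zo_x (x : 'rV[R]_d1) (y : 'rV[R]_d2) (xi : X) (u : 'rV[R]_d1) :=
  ((G (x + mu1 *: u) y xi - G x y xi) / (mu1 / d1%:R)) *: u.
Definition zo_y (x : 'rV[R]_d1) (y : 'rV[R]_d2) (zeta : X) (v : 'rV[R]_d2) :=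
  ((G x (y + mu2 *: v) zeta - G x y zeta) / (mu2 / d2%:R)) *: v.

(* samples: xs t i (with directions us t i) are the i-th samples drawn for the
   x-update at iteration t; zs t i (with directions vs t i) for the y-update *)
Variables (xs zs : nat -> nat -> X) (us : nat -> nat -> 'rV[R]_d1)
  (vs : nat -> nat -> 'rV[R]_d2).

Definition est_x (r t : nat) x y : 'rV[R]_d1 :=
  (r%:R)^-1 *: \sum_(i < r) zo_x x y (xs t i) (us t i).
Definition est_y (r t : nat) x y : 'rV[R]_d2 :=
  (r%:R)^-1 *: \sum_(i < r) zo_y x y (zs t i) (vs t i).

(* zo_iter t = (x_{t+1}, y_{t+1}, x_t, y_t, m_t, n_t) *)
Fixpoint zo_iter (t : nat) :
  'rV[R]_d1 * 'rV[R]_d2 * 'rV[R]_d1 * 'rV[R]_d2 * 'rV[R]_d1 * 'rV[R]_d2 :=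
  match t with
  | 0 =>
      let m := est_x B 0 x0 y0 in
      let x1 := x0 - alpha *: m in
      let n := est_y B 0 x1 y0 in
      let y1 := y0 + beta *: n in
      (x1, y1, x0, y0, m, n)
  | k.+1 =>
      let: (xc, yc, xp, yp, mp, np) := zo_iter k in
      let m := if (k.+1 %% q == 0)%N then est_x B k.+1 xc yc
               else est_x b k.+1 xc yc - est_x b k.+1 xp yp + mp in
      let xn := xc - alpha *: m in
      let n := if (k.+1 %% q == 0)%N then est_y B k.+1 xn yc
               else est_y b k.+1 xn yc - est_y b k.+1 xc yp + np in
      let yn := yc + beta *: n in
      (xn, yn, xc, yc, m, n)
  end.

End Algo.

Definition mean_obj (dX : measure_display) (X : measurableType dX)
  (Q : probability X R) d1 d2 (G : 'rV[R]_d1 -> 'rV[R]_d2 -> X -> R) x y : R :=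
  Rintegral Q setT (G x y).

(* index type of all random draws of the algorithm:
   inl (inl (t,i)) : sample xi for the x-update at iteration t, number i
   inl (inr (t,i)) : its direction u
   inr (inl (t,i)) : sample zeta for the y-update at iteration t, number i
   inr (inr (t,i)) : its direction v *)
Definition draw_idx : eqType := (((nat * nat) + (nat * nat)) + ((nat * nat) + (nat * nat)))%type.

Definition draw_sigma (dO : measure_display) (Omega : measurableType dO)
  (dX : measure_display) (X : measurableType dX) d1 d2
  (xs zs : nat -> nat -> Omega -> X) (us : nat -> nat -> Omega -> 'rV[R]_d1)
  (vs : nat -> nat -> Omega -> 'rV[R]_d2) (k : draw_idx) : set (set Omega) :=
  match k with
  | inl (inl (t, i)) => sigma_rv (xs t i)
  | inl (inr (t, i)) => sigma_rvec (us t i)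
  | inr (inl (t, i)) => sigma_rv (zs t i)
  | inr (inr (t, i)) => sigma_rvec (vs t i)
  end.

Section Random.
Variables (dO : measure_display) (Omega : measurableType dO).
Variables (dX : measure_display) (X : measurableType dX).
Variables (d1 d2 : nat) (G : 'rV[R]_d1 -> 'rV[R]_d2 -> X -> R).
Variables (q B b : nat) (alpha beta mu1 mu2 : R) (x0 : 'rV[R]_d1) (y0 : 'rV[R]_d2).
Variables (xs zs : nat -> nat -> Omega -> X) (us : nat -> nat -> Omega -> 'rV[R]_d1)
  (vs : nat -> nat -> Omega -> 'rV[R]_d2).
Let run w := zo_iter G q B b alpha beta mu1 mu2 x0 y0
  (fun t i => xs t i w) (fun t i => zs t i w) (fun t i => us t i w) (fun t i => vs t i w).
Definition X_rv (t : nat) (w : Omega) : 'rV[R]_d1 :=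
  if t is k.+1 then (run w k).1.1.1.1.1 else x0.
Definition Y_rv (t : nat) (w : Omega) : 'rV[R]_d2 :=
  if t is k.+1 then (run w k).1.1.1.1.2 else y0.
Definition M_rv (t : nat) (w : Omega) : 'rV[R]_d1 := (run w t).1.2.
Definition N_rv (t : nat) (w : Omega) : 'rV[R]_d2 := (run w t).2.
End Random.

End ZO.

(* Main.v *)
Require Import Defs.
From HB Require Import structures.
From mathcomp Require Import all_boot all_order all_algebra.
From mathcomp Require Import all_classical all_reals all_analysis.
Import Order.TTheory GRing.Theory Num.Theory.
Import numFieldNormedType.Exports.
Local Open Scope classical_set_scope.
Local Open Scope ring_scope.
From mathcomp Require Import ring lra.
Set Implicit Arguments.
Unset Strict Implicit.

Section Alg.
Variable R : realType.

Definition sq n (v : 'rV[R]_n) : R := \sum_(i < n) v 0 i ^+ 2.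

Lemma sq_ge0 n (v : 'rV[R]_n) : 0 <= sq v.
Proof. by apply: sumr_ge0 => i _; exact: sqr_ge0. Qed.

Lemma enorm_sq n (v : 'rV[R]_n) : enorm v ^+ 2 = sq v.
Proof. by rewrite /enorm sqr_sqrtr // sq_ge0. Qed.

Lemma enorm_ge0 n (v : 'rV[R]_n) : 0 <= enorm v.
Proof. exact: sqrtr_ge0. Qed.

Lemma sqB n (a m : 'rV[R]_n) : sq (a - m) = sq a - 2 * dotv a m + sq m.
Proof.
rewrite /sq /dotv mulr_sumr -sumrB -big_split /=; apply: eq_bigr => i _.
rewrite !mxE; ring.
Qed.

Lemma sqZ n (s : R) (m : 'rV[R]_n) : sq (s *: m) = s ^+ 2 * sq m.
Proof. rewrite /sq mulr_sumr; apply: eq_bigr => i _; rewrite !mxE; ring. Qed.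

Lemma dotvZr n (s : R) (a m : 'rV[R]_n) : dotv a (s *: m) = s * dotv a m.
Proof. rewrite /dotv mulr_sumr; apply: eq_bigr => i _; rewrite !mxE; ring. Qed.

Lemma enormZ n (s : R) (m : 'rV[R]_n) : enorm (s *: m) = `|s| * enorm m.
Proof.
by rewrite /enorm -/(sq _) sqZ sqrtrM ?sqr_ge0 // sqrtr_sqr.
Qed.

Lemma dotvBl n (a b m : 'rV[R]_n) : dotv (a - b) m = dotv a m - dotv b m.
Proof. rewrite /dotv -sumrB; apply: eq_bigr => i _; rewrite !mxE; ring. Qed.

Lemma CS2 n (a h : 'rV[R]_n) : dotv a h ^+ 2 <= sq a * sq h.
Proof.
have key (l : R) : 0 <= l ^+ 2 * sq a + 2 * l * dotv a h + sq h.
  have -> : l ^+ 2 * sq a + 2 * l * dotv a h + sq h = \sum_(i < n) (l * a 0 i + h 0 i) ^+ 2.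
    rewrite /sq /dotv !mulr_sumr -!big_split /=; apply: eq_bigr => i _; ring.
  by apply: sumr_ge0 => i _; exact: sqr_ge0.
have [a0|an0] := eqVneq (sq a) 0.
  have -> : dotv a h = 0.
    rewrite /dotv big1 // => i _.
    have : a 0 i ^+ 2 = 0.
      by apply: (psumr_eq0P (P := xpredT) _ a0) => // j _; exact: sqr_ge0.
    by move/eqP; rewrite sqrf_eq0 => /eqP ->; rewrite mul0r.
  by rewrite a0 expr0n /= mul0r.
have ap : 0 < sq a by rewrite lt_def an0 sq_ge0.
have := key (- dotv a h / sq a).
have -> : (- dotv a h / sq a) ^+ 2 * sq a + 2 * (- dotv a h / sq a) * dotv a h + sq h
   = (sq a * sq h - dotv a h ^+ 2) / sq a by field; rewrite an0.
by rewrite pmulr_lge0 ?invr_gt0 // subr_ge0.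
Qed.
End Alg.
Section Alg2.
Variable R : realType.
Lemma CS n (a h : 'rV[R]_n) : `|dotv a h| <= enorm a * enorm h.
Proof.
rewrite -(@ler_pXn2r _ 2) // ?nnegrE ?mulr_ge0 ?enorm_ge0 //.
by rewrite real_normK ?num_real // exprMn !enorm_sq CS2.
Qed.
End Alg2.
Section An1.
Variable R : realType.

Lemma grad_dot n (f : 'rV[R]_n -> R) z h : differentiable f z ->
  dotv (grad f z) h = 'd f z h.
Proof.
move=> df; rewrite {2}(row_sum_delta h) linear_sum /dotv; apply: eq_bigr => i _.
by rewrite linearZ /= /grad mxE deriveE // mulrC.
Qed.

Lemma phi_is_derive n (f : 'rV[R]_n -> R) x h s : differentiable f (x + s *: h) ->
  is_derive s 1 (fun s => f (x + s *: h)) ('d f (x + s *: h) h).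
Proof.
move=> df.
have E : (fun t : R => t^-1 *: (((fun s => f (x + s *: h)) \o shift s) (t *: 1) - f (x + s *: h)))
   = (fun t : R => t^-1 *: ((f \o shift (x + s *: h)) (t *: h) - f (x + s *: h))).
  apply/funext => t /=; congr (_ *: (f _ - _)).
  by rewrite scaler1 scalerDl addrCA addrC.
have dv : derivable f (x + s *: h) h by exact: diff_derivable.
apply: DeriveDef; rewrite /derivable /derive E //.
by rewrite -/(derive _ _ _) deriveE.
Qed.
End An1.
Section An.
Variable R : realType.

Lemma mono_aux (p dp : R -> R) (d k : R) :
  (forall s : R, is_derive s (1:R) p (dp s)) ->
  (forall s, 0 < s < 1 -> - (2 * k * s) <= dp s - d) ->
  - k <= p 1 - p 0 - d.
Proof.
move=> hp hd.
pose psi := p + k \*: ((@id R) * id) - d \*: id.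
have Dpsi (s : R) : is_derive s (1:R) psi (dp s + k *: (s *: 1 + s *: 1) - d *: 1).
  rewrite /psi; apply: is_deriveB; apply: is_deriveD => //.
have dpsi s : derivable psi s 1 by case: (Dpsi s).
have : psi 0 <= psi 1.
  apply: (@ger0_derive1_ndecr _ psi 0 1) => //.
  - move=> s; rewrite in_itv /= => /andP[s0 s1].
    rewrite derive1E; case: (Dpsi s) => _ ->; rewrite !scaler1.
    have := hd s; rewrite s0 s1 => /(_ isT). rewrite -[k *: _]/(k * (s + s)). lra.
  - apply: continuous_subspaceT => s.
    apply: differentiable_continuous; exact/derivable1_diffP.
rewrite /psi !fctE /= !mul0r mulr1 !scaler0 -[k%:A]/(k * 1) -[d%:A]/(d * 1). lra.
Qed.
End An.
Section Desc.
Variable R : realType.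
Lemma descent n (f : 'rV[R]_n -> R) (l : R) : 0 <= l -> (forall z, differentiable f z) ->
 (forall z w, enorm (grad f z - grad f w) <= l * enorm (z - w)) ->
 forall x h, `|f (x + h) - f x - dotv (grad f x) h| <= l / 2 * sq h.
Proof.
move=> l0 df Lf x h.
pose p := fun s : R => f (x + s *: h).
pose dp := fun s : R => dotv (grad f (x + s *: h)) h.
have hp (s : R) : is_derive s (1:R) p (dp s).
  rewrite /dp (grad_dot h (df (x + s *: h))); exact: phi_is_derive.
have bd (s : R) : 0 < s < 1 -> `|dp s - dp 0| <= 2 * (l / 2 * sq h) * s.
  case/andP=> s0 s1.
  rewrite /dp -dotvBl.
  apply: (le_trans (CS _ _)).
  have -> : 2 * (l / 2 * sq h) * s = (l * enorm (x + s *: h - (x + 0 *: h))) * enorm h.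
    rewrite scale0r addr0 addrAC subrr add0r enormZ gtr0_norm // -enorm_sq; by field.
  by apply: (ler_wpM2r (enorm_ge0 h)); exact: Lf.
have p1 : p 1 = f (x + h) by rewrite /p scale1r.
have p0 : p 0 = f x by rewrite /p scale0r addr0.
have d0 : dp 0 = dotv (grad f x) h by rewrite /dp scale0r addr0.
have A1 := @mono_aux _ p dp (dp 0) (l / 2 * sq h) hp.
have A2 := @mono_aux _ (- p) (fun s => - dp s) (- dp 0) (l / 2 * sq h).
rewrite ler_norml; apply/andP; split.
  rewrite -p1 -p0 -d0; apply: A1 => s hs.
  by have := bd s hs; rewrite ler_norml => /andP[].
have := A2 (fun s => is_deriveN (hp s)).
rewrite !fctE p1 p0 d0 => H.
have : - (l / 2 * sq h) <= - f (x + h) - - f x - - dotv (grad f x) h.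
  apply: H => s hs; have := bd s hs; rewrite ler_norml => /andP[_].
  rewrite -d0; lra.
lra.
Qed.
End Desc.
Section Lim.
Variable R : realType.

Lemma lin_cvg (q : R -> R) (L c : R) : 0 <= c ->
  (forall t, t != 0 -> `|q t - L| <= c * `|t|) -> q @ 0^' --> L.
Proof.
move=> c0 hq; apply/cvgrPdist_le => e e0.
have ce : 0 < e / (c + 1) by rewrite divr_gt0 // ltr_wpDl.
near=> t.
have t0 : t != 0 by near: t; exact: nbhs_dnbhs_neq.
have tl : `|t| <= e / (c + 1) by near: t; exact: dnbhs0_le.
rewrite distrC (le_trans (hq t t0)) //.
apply: (le_trans (ler_wpM2l c0 tl)).
rewrite mulrA ler_pdivrMr ?ltr_wpDl //; nra.
Unshelve. all: end_near. Qed.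
End Lim.

Section Integ.
Context d (T : measurableType d) (R : realType) (P : probability T R).
Definition iR (f : T -> R) := P.-integrable setT (EFin \o f).

Lemma iR_D f g : iR f -> iR g -> iR (fun x => f x + g x).
Proof. by move=> hf hg; apply: eq_integrable (integrableD _ hf hg) => // x _. Qed.
Lemma iR_N f : iR f -> iR (fun x => - f x).
Proof. by move=> hf; apply: eq_integrable (integrableN hf) => // x _. Qed.
Lemma iR_B f g : iR f -> iR g -> iR (fun x => f x - g x).
Proof. by move=> hf hg; apply: iR_D => //; exact: iR_N. Qed.
Lemma iR_Zl (k : R) f : iR f -> iR (fun x => k * f x).
Proof. by move=> hf; apply: eq_integrable (integrableZl _ k hf) => // x _. Qed.
Lemma iR_cst (k : R) : iR (fun _ => k).
Proof. exact: finite_measure_integrable_cst. Qed.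
Lemma iR_sum n (f : 'I_n -> T -> R) : (forall i, iR (f i)) -> iR (fun x => \sum_(i < n) f i x).
Proof.
move=> hf; have := @integrable_sum _ _ _ P setT measurableT _ (index_enum 'I_n) xpredT (fun i x => (f i x)%:E) (fun i _ => hf i).
by apply: eq_integrable => // x _ /=; rewrite sumEFin.
Qed.
Lemma iR_meas f : iR f -> measurable_fun setT f.
Proof. by move=> /(measurable_int P) /measurable_realfun.measurable_EFinP. Qed.

Lemma Rint_cst (k : R) : Rintegral P setT (fun _ => k) = k.
Proof.
rewrite Rintegral_cst //.
transitivity (k * 1); last exact: mulr1.
congr (_ * _); rewrite -[1]/(fine 1%E); apply: (congr1 fine).
exact: probability_setT.
Qed.

Lemma Rint_sum n (f : 'I_n -> T -> R) : (forall i, iR (f i)) ->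
  Rintegral P setT (fun x => \sum_(i < n) f i x) = \sum_(i < n) Rintegral P setT (f i).
Proof.
elim: n f => [|n IH] f hf.
  by under eq_Rintegral do rewrite big_ord0; rewrite big_ord0 Rint_cst.
under eq_Rintegral do rewrite big_ord_recr /=.
rewrite RintegralD //.
- by rewrite IH // big_ord_recr.
- by apply: iR_sum => i; exact: hf.
- exact: hf.
Qed.
End Integ.
Section Mean.
Variable R : realType.
Lemma sq_delta n (i : 'I_n) : sq (delta_mx 0 i : 'rV[R]_n) = 1.
Proof.
rewrite /sq (bigD1 i) //= big1 ?addr0 => [|j ji]; rewrite !mxE ?eqxx /=.
  by rewrite expr1n.
by rewrite (negbTE ji) expr0n.
Qed.
Lemma dot_delta n (v : 'rV[R]_n) (i : 'I_n) : dotv v (delta_mx 0 i) = v 0 i.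
Proof.
rewrite /dotv (bigD1 i) //= big1 ?addr0 => [|j ji]; rewrite !mxE ?eqxx /=.
  by rewrite mulr1.
by rewrite (negbTE ji) mulr0.
Qed.

Lemma seq_cvg (u : nat -> R) (a c : R) : 0 <= c ->
  (forall m, `|u m - a| <= c * (m.+1%:R)^-1) -> u @ \oo --> a.
Proof.
move=> c0 hu; apply/cvgrPdist_le => e e0.
have ce : 0 < e / (c + 1) by rewrite divr_gt0 // ltr_wpDl.
have H := (cvgrPdist_le _ _).1 (@cvg_harmonic R) _ ce.
near=> m.
have : `|0 - harmonic m| <= e / (c + 1) by near: m; exact: H.
rewrite sub0r normrN /= ger0_norm // => hm.
rewrite distrC (le_trans (hu m)) //.
apply: (le_trans (ler_wpM2l c0 hm)).
rewrite mulrA ler_pdivrMr ?ltr_wpDl //; nra.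
Unshelve. all: end_near. Qed.
End Mean.

Section MeanDesc.
Context d (T : measurableType d) (R : realType) (Q : probability T R).
Variables (n : nat) (F : 'rV[R]_n -> T -> R) (c : R).
Hypothesis c0 : 0 <= c.
Hypothesis Fint : forall x, iR Q (F x).
Hypothesis HF : forall w x h,
  `|F (x + h) w - F x w - dotv (grad (fun z => F z w) x) h| <= c * sq h.

Let g := fun x => Rintegral Q setT (F x).

Lemma fld_aux (t A B C : R) : t != 0 -> t^-1 * (A - B) - C = t^-1 * (A - B - t * C).
Proof. by move=> t0; field. Qed.

Section AtX.
Variable x : 'rV[R]_n.
Let a (i : 'I_n) (w : T) := grad (fun z => F z w) x 0 i.
Let e (i : 'I_n) : 'rV[R]_n := delta_mx 0 i.

Lemma pb i w s : `|F (x + s *: e i) w - F x w - s * a i w| <= c * s ^+ 2.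
Proof.
have := HF w x (s *: e i).
by rewrite dotvZr dot_delta sqZ sq_delta mulr1.
Qed.

Lemma a_meas i : measurable_fun setT (a i).
Proof.
pose u m w := (m.+1%:R : R) * (F (x + (m.+1%:R)^-1 *: e i) w - F x w).
apply: (@measurable_realfun.measurable_fun_cvg _ _ _ _ u).
  move=> m; apply: iR_meas; rewrite /u; apply: iR_Zl; apply: iR_B; exact: Fint.
move=> w _; apply: (@seq_cvg _ _ _ c c0) => m.
have hm : (0 : R) < m.+1%:R by rewrite ltr0n.
have := pb i w (m.+1%:R^-1).
rewrite /u.
have -> : m.+1%:R * (F (x + m.+1%:R^-1 *: e i) w - F x w) - a i w
   = m.+1%:R * (F (x + m.+1%:R^-1 *: e i) w - F x w - m.+1%:R^-1 * a i w).
  by field; rewrite lt0r_neq0.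
rewrite normrM (ger0_norm (ltW hm)) => H.
apply: (le_trans (ler_wpM2l (ltW hm) H)).
rewrite le_eqVlt; apply/orP; left; apply/eqP; field; by rewrite lt0r_neq0.
Qed.

Lemma a_int i : iR Q (a i).
Proof.
apply: (@le_integrable _ _ _ Q setT measurableT _
   (EFin \o (fun w => `|F (x + e i) w - F x w| + c))).
- exact/measurable_realfun.measurable_EFinP/a_meas.
- move=> w _; rewrite /= lee_fin.
  have := pb i w 1; rewrite scale1r mul1r expr1n mulr1 => H.
  rewrite [X in _ <= X]ger0_norm ?addr_ge0 //.
  have := ler_normB (F (x + e i) w - F x w) (F (x + e i) w - F x w - a i w).
  have -> : F (x + e i) w - F x w - (F (x + e i) w - F x w - a i w) = a i w by ring.
  lra.
- apply: iR_D; last exact: iR_cst.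
  by apply: integrable_norm; apply: iR_B; exact: Fint.
Qed.

Lemma deriv_g i : derive g x (e i) = Rintegral Q setT (a i).
Proof.
apply: cvg_lim => //.
apply: (@lin_cvg _ _ _ c c0) => t t0 /=.
have E : t^-1 *: (g (t *: e i + x) - g x) - Rintegral Q setT (a i)
   = t^-1 * Rintegral Q setT (fun w => F (x + t *: e i) w - F x w - t * a i w).
  rewrite RintegralB //; last by apply: iR_Zl; exact: a_int.
    rewrite RintegralB //; try exact: Fint.
    have Z := (@RintegralZl _ _ _ Q setT (a i) t measurableT (a_int i)). rewrite Z.
    rewrite /g [X in F X]addrC.
    exact (@fld_aux t (Rintegral Q setT (F (x + t *: e i))) (Rintegral Q setT (F x)) (Rintegral Q setT (a i)) t0).
  by apply: iR_B; exact: Fint.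
rewrite E normrM normfV.
have B : `|Rintegral Q setT (fun w => F (x + t *: e i) w - F x w - t * a i w)| <= c * t ^+ 2.
  rewrite ler_norml; apply/andP; split.
    rewrite -[X in X <= _](Rint_cst Q); apply: le_Rintegral => //.
    - exact: iR_cst.
    - by apply: iR_B; [apply: iR_B; exact: Fint | apply: iR_Zl; exact: a_int].
    - by move=> w _; have := pb i w t; rewrite ler_norml => /andP[].
  rewrite -[X in _ <= X](Rint_cst Q); apply: le_Rintegral => //.
  - by apply: iR_B; [apply: iR_B; exact: Fint | apply: iR_Zl; exact: a_int].
  - exact: iR_cst.
  - by move=> w _; have := pb i w t; rewrite ler_norml => /andP[].
have tp : 0 < `|t| by rewrite normr_gt0.
rewrite -(ler_pM2l tp) mulrA mulfV ?lt0r_neq0 // mul1r.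
rewrite -real_normK ?num_real // in B; rewrite (le_trans B) // le_eqVlt; apply/orP; left; apply/eqP; ring.
Qed.
Lemma dot_int h : iR Q (fun w => dotv (grad (fun z => F z w) x) h).
Proof.
apply: (@iR_sum _ _ _ Q n (fun i w => a i w * h 0 i)) => i.
have := iR_Zl (h 0 i) (a_int i).
by apply: eq_integrable => // w _ /=; rewrite mulrC.
Qed.

Lemma dot_g h : dotv (grad g x) h = Rintegral Q setT (fun w => dotv (grad (fun z => F z w) x) h).
Proof.
transitivity (\sum_(i < n) Rintegral Q setT (fun w => a i w * h 0 i)).
  apply: eq_bigr => i _; rewrite /grad mxE.
  have -> : derive g x (delta_mx 0 i) = Rintegral Q setT (a i) by exact: deriv_g.
  by rewrite (@RintegralZr _ _ _ Q setT (a i) (h 0 i) measurableT (a_int i)).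
rewrite -(@Rint_sum _ _ _ Q n (fun i w => a i w * h 0 i)); last first.
  move=> i; have := iR_Zl (h 0 i) (a_int i).
  by apply: eq_integrable => // w _ /=; rewrite mulrC.
by [].
Qed.

Lemma mean_descent h : - (c * sq h) <= g (x + h) - g x - dotv (grad g x) h.
Proof.
rewrite dot_g /g -(@RintegralB _ _ _ Q setT); try exact: Fint; last by [].
rewrite -(@RintegralB _ _ _ Q setT) //; last exact: dot_int.
  rewrite -[X in X <= _](Rint_cst Q); apply: le_Rintegral => //.
  - exact: iR_cst.
  - by apply: iR_B; [apply: iR_B; exact: Fint | exact: dot_int].
  - by move=> w _; have := HF w x h; rewrite ler_norml => /andP[].
by apply: iR_B; exact: Fint.
Qed.
End AtX.
End MeanDesc.

Section Final.
Context d (T : measurableType d) (R : realType) (P : probability T R).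
Lemma lin7 (f0 f1 f2 f3 f4 f5 f6 : T -> R) (k1 k2 k3 k4 k5 k6 : R) :
  iR P f0 -> iR P f1 -> iR P f2 -> iR P f3 -> iR P f4 -> iR P f5 -> iR P f6 ->
  Rintegral P setT (fun w => f0 w + k1 * f1 w - k2 * f2 w - k3 * f3 w + k4 * f4 w
     + k5 * f5 w - k6 * f6 w) =
  Rintegral P setT f0 + k1 * Rintegral P setT f1 - k2 * Rintegral P setT f2
  - k3 * Rintegral P setT f3 + k4 * Rintegral P setT f4 + k5 * Rintegral P setT f5
  - k6 * Rintegral P setT f6.
Proof.
move=> i0 i1 i2 i3 i4 i5 i6.
have Z k f : iR P f -> Rintegral P setT (fun w => k * f w) = k * Rintegral P setT f.
  by move=> hf; rewrite RintegralZl.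
have D f g : iR P f -> iR P g -> Rintegral P setT (fun w => f w + g w) = Rintegral P setT f + Rintegral P setT g.
  by move=> hf hg; rewrite RintegralD.
have B f g : iR P f -> iR P g -> Rintegral P setT (fun w => f w - g w) = Rintegral P setT f - Rintegral P setT g.
  by move=> hf hg; rewrite RintegralB.
have N f : iR P f -> Rintegral P setT (fun w => - f w) = - Rintegral P setT f.
  move=> hf; have := B (fun=> 0) f (iR_cst P 0) hf; rewrite Rint_cst sub0r => <-.
  by apply: eq_Rintegral => w _; rewrite sub0r.
rewrite B ?D ?B ?D ?B ?D ?N ?Z //.
all: repeat (apply: iR_B || apply: iR_D || apply: iR_N || apply: iR_Zl || assumption).
Qed.
End Final.

Section PW.
Variable R : realType.
Lemma enorm0 n : enorm (0 : 'rV[R]_n) = 0.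
Proof. by rewrite /enorm big1 ?sqrtr0 // => i _; rewrite mxE expr0n. Qed.

Lemma pointwise (dX : measure_display) (X : measurableType dX) (Pxi : probability X R)
  (d1 d2 : nat) (G : 'rV[R]_d1 -> 'rV[R]_d2 -> X -> R) (lbar : R)
  (hl : 0 < lbar)
  (hGint : forall x y, Pxi.-integrable setT (fun z => (G x y z)%:E))
  (hdx : forall x y z, differentiable (fun x' => G x' y z) x)
  (hdy : forall x y z, differentiable (fun y' => G x y' z) y)
  (hLx : forall z x1 x2 y1 y2,
     enorm (grad_x (fun x y => G x y z) x1 y1 - grad_x (fun x y => G x y z) x2 y2)
       <= lbar * (enorm (x1 - x2) + enorm (y1 - y2)))
  (hLy : forall z x1 x2 y1 y2,
     enorm (grad_y (fun x y => G x y z) x1 y1 - grad_y (fun x y => G x y z) x2 y2)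
       <= lbar * (enorm (x1 - x2) + enorm (y1 - y2)))
  (alpha beta : R) x y m nn :
  forall g, g = mean_obj Pxi G ->
  g x y + beta / 2 * enorm (grad_y g (x - alpha *: m) y) ^+ 2
    - alpha / 2 * enorm (grad_x g x y) ^+ 2
    - beta / 2 * enorm (grad_y g (x - alpha *: m) y - nn) ^+ 2
    + alpha / 2 * enorm (grad_x g x y - m) ^+ 2
    + beta / 2 * (1 - lbar * beta) * enorm nn ^+ 2
    - alpha / 2 * (1 + alpha * lbar) * enorm m ^+ 2
  <= g (x - alpha *: m) (y + beta *: nn).
Proof.
move=> g0 ->.
have l0 : 0 <= lbar by exact: ltW.
have c0 : 0 <= lbar / 2 by rewrite divr_ge0.
set g := mean_obj Pxi G.
set x1 := x - alpha *: m.
set gx := grad_x g x y.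
set gy := grad_y g x1 y.
have HFx : forall w x' h, `|G (x' + h) y w - G x' y w - dotv (grad (fun z => G z y w) x') h| <= lbar / 2 * sq h.
  move=> w; apply: descent => // z z'.
  have := hLx w z z' y y; by rewrite subrr enorm0 addr0.
have HFy : forall w y' h, `|G x1 (y' + h) w - G x1 y' w - dotv (grad (fun z => G x1 z w) y') h| <= lbar / 2 * sq h.
  move=> w; apply: descent => // z z'.
  have := hLy w x1 x1 z z'; by rewrite subrr enorm0 add0r.
have DX : - (lbar / 2 * sq ((- alpha) *: m)) <= g (x + (- alpha) *: m) y - g x y - dotv gx ((- alpha) *: m).
  exact: (@mean_descent _ _ _ Pxi _ (fun x' w => G x' y w) (lbar / 2) c0 (fun x' => hGint x' y) HFx x ((- alpha) *: m)).
have DY : - (lbar / 2 * sq (beta *: nn)) <= g x1 (y + beta *: nn) - g x1 y - dotv gy (beta *: nn).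
  exact: (@mean_descent _ _ _ Pxi _ (fun y' w => G x1 y' w) (lbar / 2) c0 (fun y' => hGint x1 y') HFy y (beta *: nn)).
rewrite !sqZ !dotvZr in DX DY.
rewrite scaleNr -/x1 in DX.
rewrite !enorm_sq !sqB.
nra.
Qed.
End PW.

Section Step.
Variable R : realType.
Lemma step_rel (dO : measure_display) (Omega : measurableType dO)
  (dX : measure_display) (X : measurableType dX) (d1 d2 : nat)
  (G : 'rV[R]_d1 -> 'rV[R]_d2 -> X -> R) (q B b : nat) (alpha beta mu1 mu2 : R)
  (x0 : 'rV[R]_d1) (y0 : 'rV[R]_d2)
  (xs zs : nat -> nat -> Omega -> X) (us : nat -> nat -> Omega -> 'rV[R]_d1)
  (vs : nat -> nat -> Omega -> 'rV[R]_d2) t w :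
  X_rv G q B b alpha beta mu1 mu2 x0 y0 xs zs us vs t.+1 w =
    X_rv G q B b alpha beta mu1 mu2 x0 y0 xs zs us vs t w
    - alpha *: M_rv G q B b alpha beta mu1 mu2 x0 y0 xs zs us vs t w /\
  Y_rv G q B b alpha beta mu1 mu2 x0 y0 xs zs us vs t.+1 w =
    Y_rv G q B b alpha beta mu1 mu2 x0 y0 xs zs us vs t w
    + beta *: N_rv G q B b alpha beta mu1 mu2 x0 y0 xs zs us vs t w.
Proof.
rewrite /X_rv /Y_rv /M_rv /N_rv; case: t => [|k] //=.
by case: (zo_iter _ _ _ _ _ _ _ _ _ _ _ _ _ _ k) => [[[[[xc yc] xp] yp] mp] np].
Qed.
End Step.

Unset Implicit Arguments.
Set Strict Implicit.

Theorem lemma6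
  (R : realType)
  (dO : measure_display) (Omega : measurableType dO) (P : probability Omega R)
  (dX : measure_display) (X : measurableType dX) (Pxi : probability X R)
  (d1 d2 : nat) (G : 'rV[R]_d1 -> 'rV[R]_d2 -> X -> R) (lbar : R)
  (hl : 0 < lbar)
  (hGint : forall x y, Pxi.-integrable setT (fun z => (G x y z)%:E))
  (hdx : forall x y z, differentiable (fun x' => G x' y z) x)
  (hdy : forall x y z, differentiable (fun y' => G x y' z) y)
  (hLx : forall z x1 x2 y1 y2,
     enorm (grad_x (fun x y => G x y z) x1 y1 - grad_x (fun x y => G x y z) x2 y2)
       <= lbar * (enorm (x1 - x2) + enorm (y1 - y2)))
  (hLy : forall z x1 x2 y1 y2,
     enorm (grad_y (fun x y => G x y z) x1 y1 - grad_y (fun x y => G x y z) x2 y2)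
       <= lbar * (enorm (x1 - x2) + enorm (y1 - y2)))
  (q B b : nat) (hq : (0 < q)%N) (hB : (0 < B)%N) (hb : (0 < b)%N)
  (alpha beta mu1 mu2 : R)
  (ha : 0 < alpha) (hbeta : 0 < beta) (hmu1 : 0 < mu1) (hmu2 : 0 < mu2)
  (x0 : 'rV[R]_d1) (y0 : 'rV[R]_d2)
  (xs zs : nat -> nat -> Omega -> X)
  (us : nat -> nat -> Omega -> 'rV[R]_d1) (vs : nat -> nat -> Omega -> 'rV[R]_d2)
  (hxs : forall t i, has_law P Pxi (xs t i))
  (hzs : forall t i, has_law P Pxi (zs t i))
  (hus : forall t i, unif_sphere P (us t i))
  (hvs : forall t i, unif_sphere P (vs t i))
  (hind : mutually_independent P (draw_sigma xs zs us vs))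
  (t : nat) :
  let g := mean_obj Pxi G in
  let xr := X_rv G q B b alpha beta mu1 mu2 x0 y0 xs zs us vs in
  let yr := Y_rv G q B b alpha beta mu1 mu2 x0 y0 xs zs us vs in
  let mr := M_rv G q B b alpha beta mu1 mu2 x0 y0 xs zs us vs in
  let nr := N_rv G q B b alpha beta mu1 mu2 x0 y0 xs zs us vs in
  let g_t := fun w => g (xr t w) (yr t w) in
  let g_t1 := fun w => g (xr t.+1 w) (yr t.+1 w) in
  let gy2 := fun w => enorm (grad_y g (xr t.+1 w) (yr t w)) ^+ 2 in
  let gx2 := fun w => enorm (grad_x g (xr t w) (yr t w)) ^+ 2 in
  let ey2 := fun w => enorm (grad_y g (xr t.+1 w) (yr t w) - nr t w) ^+ 2 in
  let ex2 := fun w => enorm (grad_x g (xr t w) (yr t w) - mr t w) ^+ 2 in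
  let n2 := fun w => enorm (nr t w) ^+ 2 in
  let m2 := fun w => enorm (mr t w) ^+ 2 in
  rv_integrable P g_t -> rv_integrable P g_t1 -> rv_integrable P gy2 ->
  rv_integrable P gx2 -> rv_integrable P ey2 -> rv_integrable P ex2 ->
  rv_integrable P n2 -> rv_integrable P m2 ->
  expect P g_t1 >= expect P g_t + beta / 2 * expect P gy2 - alpha / 2 * expect P gx2
               - beta / 2 * expect P ey2 + alpha / 2 * expect P ex2
               + beta / 2 * (1 - lbar * beta) * expect P n2
               - alpha / 2 * (1 + alpha * lbar) * expect P m2.
Proof.
move=> g xr yr mr nr g_t g_t1 gy2 gx2 ey2 ex2 n2 m2 i1 i2 i3 i4 i5 i6 i7 i8.
pose RHSf := fun w => g_t w + beta / 2 * gy2 w - alpha / 2 * gx2 w - beta / 2 * ey2 w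
  + alpha / 2 * ex2 w + beta / 2 * (1 - lbar * beta) * n2 w
  - alpha / 2 * (1 + alpha * lbar) * m2 w.
have PW : forall w, RHSf w <= g_t1 w.
  move=> w.
  have [ex ey] := step_rel G q B b alpha beta mu1 mu2 x0 y0 xs zs us vs t w.
  have H := @pointwise R dX X Pxi d1 d2 G lbar hl hGint hdx hdy hLx hLy alpha beta
    (xr t w) (yr t w) (mr t w) (nr t w) g erefl.
  rewrite -ex -ey in H; exact H.
have iRHS : iR P RHSf.
  rewrite /RHSf.
  by repeat (apply: iR_B || apply: iR_D || apply: iR_N || apply: iR_Zl || assumption).
have H1 : Rintegral P setT RHSf <= Rintegral P setT g_t1.
  by apply: le_Rintegral => // w _; exact: PW.
have H2 := lin7 (beta / 2) (alpha / 2) (beta / 2) (alpha / 2)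
  (beta / 2 * (1 - lbar * beta)) (alpha / 2 * (1 + alpha * lbar)) i1 i3 i4 i5 i6 i7 i8.
apply: (le_trans _ H1).
by rewrite /RHSf H2 /expect lexx.
Qed.
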